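(* In the quality-unaware crowdsensing role selection game described in the context (with $w=1$), on the regime $[0,\Phi_0]$, where $\Phi_0=1-\eta s-p-(1-\eta)$, the function $\Lambda(\Phi)$ is either monotonically increasing in $\Phi$, or first decreasing and then increasing in $\Phi$ (i.e., there is $\Phi'\in[0,\Phi_0]$ such that $\Lambda$ is decreasing on $[0,\Phi']$ and increasing on $[\Phi',\Phi_0]$).
   Context: Users form a continuum; a user's type is $(v,c)\in[0,1]^2$, distributed uniformly on $[0,1]^2$. Parameters: weight $w=1$, $s\ge0$, $\eta\in[0,1]$, $p\ge0$. Each user chooses a role in $\{\mathrm S,\mathrm R,\mathrm A\}$. Given a number $\Phi$, payoffs are $\pi_{vc}(\mathrm{S})=v-c+\Phi$, $\pi_{vc}(\mathrm{R})=\eta(v-s)-p$, $\pi_{vc}(\mathrm{A})=0$, and a requester pays $\beta_{vc}=(1-\eta)(v-s)+p$. Define $\widetilde{S}^{\mathrm S}(\Phi)=\{(v,c)\in[0,1]^2:\pi_{vc}(\mathrm S)>\pi_{vc}(\mathrm R),\pi_{vc}(\mathrm S)>\pi_{vc}(\mathrm A)\}$, $\widetilde{S}^{\mathrm R}(\Phi)=\{(v,c)\in[0,1]^2:\pi_{vc}(\mathrm R)>\pi_{vc}(\mathrm S),\pi_{vc}(\mathrm R)>\pi_{vc}(\mathrm A)\}$, $N^{se}(\Phi)=\iint_{\widetilde{S}^{\mathrm S}(\Phi)}\mathrm dv\,\mathrm dc$, $B^{se}(\Phi)=\iint_{\widetilde{S}^{\mathrm R}(\Phi)}[(1-\eta)(v-s)+p]\,\mathrm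 dv\,\mathrm dc$, and $\Lambda(\Phi)=\Phi N^{se}(\Phi)-B^{se}(\Phi)$ (on $[0,\Phi_0]$ this is the function the paper denotes $\Lambda_l$). *)

(* Defs.v *)
From Stdlib Require Import Reals.
From Coquelicot Require Import Coquelicot.
Open Scope R_scope.

(* Payoffs of a user of type (v,c), with weight w = 1. *)
Definition pi_S (Phi v c : R) : R := v - c + Phi.
Definition pi_R (eta s p v : R) : R := eta * (v - s) - p.
Definition pi_A : R := 0.

Definition beta_pay (eta s p v : R) : R := (1 - eta) * (v - s) + p.

(* Indicator of the strict-preference region S~^S(Phi) (restricted to [0,1]^2
   via the integration bounds below). *)
Definition ind_S (eta s p Phi v c : R) : R :=
  if Rlt_dec (pi_R eta s p v) (pi_S Phi v c) then
    if Rlt_dec pi_A (pi_S Phi v c) then 1 else 0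
  else 0.

Definition ind_R (eta s p Phi v c : R) : R :=
  if Rlt_dec (pi_S Phi v c) (pi_R eta s p v) then
    if Rlt_dec pi_A (pi_R eta s p v) then 1 else 0
  else 0.

Definition N_se (eta s p Phi : R) : R :=
  RInt (fun c => RInt (fun v => ind_S eta s p Phi v c) 0 1) 0 1.

Definition B_se (eta s p Phi : R) : R :=
  RInt (fun c => RInt (fun v => ind_R eta s p Phi v c * beta_pay eta s p v) 0 1) 0 1.

Definition Lambda (eta s p Phi : R) : R := Phi * N_se eta s p Phi - B_se eta s p Phi.

Definition Phi0 (eta s p : R) : R := 1 - eta * s - p - (1 - eta).

(* Main.v *)
Require Import Defs.
From Stdlib Require Import Reals.
From Coquelicot Require Import Coquelicot.
Open Scope R_scope.
From Stdlib Require Import Lra Classical_Prop.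

Lemma mono01 (g : R -> R) (a b : R) : a <= b ->
  (forall x, g x = 0 \/ g x = 1) ->
  (forall x y, a <= x -> x <= y -> y <= b -> g x <= g y) -> ex_RInt g a b.
Proof.
intros hab h01 hm.
destruct (h01 b) as [hb|hb].
{ apply ex_RInt_ext with (fun _ => 0). 2: apply ex_RInt_const.
  intros x hx. rewrite Rmin_left in hx by lra. rewrite Rmax_right in hx by lra.
  assert (g x <= g b) by (apply hm; lra). destruct (h01 x); lra. }
destruct (h01 a) as [ha|ha].
2:{ apply ex_RInt_ext with (fun _ => 1). 2: apply ex_RInt_const.
  intros x hx. rewrite Rmin_left in hx by lra. rewrite Rmax_right in hx by lra.
  assert (g a <= g x) by (apply hm; lra). destruct (h01 x); lra. }
set (E := fun x => a <= x <= b /\ g x = 0).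
destruct (completeness E) as [t [ht1 ht2]].
{ exists b. intros x [hx _]; lra. }
{ exists a; split; [lra|auto]. }
assert (hat : a <= t) by (apply ht1; split; [lra|auto]).
assert (htb : t <= b) by (apply ht2; intros x [hx _]; lra).
apply ex_RInt_Chasles with t.
- apply ex_RInt_ext with (fun _ => 0). 2: apply ex_RInt_const.
  intros x hx. rewrite Rmin_left in hx by lra. rewrite Rmax_right in hx by lra.
  destruct (Classical_Prop.classic (exists y, E y /\ x < y)) as [[y [[hy1 hy2] hy3]]|hn].
  + assert (g x <= g y) by (apply hm; lra). destruct (h01 x); lra.
  + exfalso. assert (t <= x). { apply ht2. intros z hz. destruct (Rle_dec z x); auto.
      exfalso; apply hn; exists z; split; auto; lra. } lra.
- apply ex_RInt_ext with (fun _ => 1). 2: apply ex_RInt_const.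
  intros x hx. rewrite Rmin_left in hx by lra. rewrite Rmax_right in hx by lra.
  destruct (h01 x) as [h|h]; auto. exfalso.
  assert (x <= t) by (apply ht1; split; [lra|auto]). lra.
Qed.

Section Approx.
Variables (f : R -> R) (m M : R).
Definition ind (d : R) (k : nat) (x : R) : R :=
  if Rle_dec (m + (INR k + 1) * d) (f x) then 1 else 0.
Definition S_ (d : R) (n : nat) (x : R) := sum_f_R0 (fun k => ind d k x) n.

Lemma claim (d : R) (hd : 0 <= d) x (hm : m <= f x) : forall n,
  (0 <= S_ d n x <= INR n + 1) /\
  ((S_ d n x = INR n + 1 /\ m + (INR n + 1)*d <= f x) \/
   (m + d * S_ d n x <= f x < m + d * (S_ d n x + 1))).
Proof.
induction n as [|n IH].
- unfold S_; simpl. unfold ind. simpl. destruct Rle_dec.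
  + split; [lra|]. left; split; lra.
  + split; [lra|]. right; lra.
- unfold S_ in *. simpl sum_f_R0. rewrite S_INR.
  assert (hI : (ind d (S n) x = 1 /\ m + (INR n + 1 + 1) * d <= f x) \/
               (ind d (S n) x = 0 /\ f x < m + (INR n + 1 + 1) * d)).
  { unfold ind. rewrite S_INR. destruct Rle_dec; [left|right]; lra. }
  set (T := sum_f_R0 (fun k : nat => ind d k x) n) in *.
  destruct IH as [[h0 h1] [[e1 e2]|[e1 e2]]]; destruct hI as [[i1 i2]|[i1 i2]]; rewrite i1.
  + split; [lra|]. left; split; lra.
  + split; [lra|]. right. rewrite Rplus_0_r, e1. nra.
  + exfalso. nra.
  + split; [lra|]. right. rewrite Rplus_0_r. lra.
Qed.
End Approx.

Lemma ind_01 f m d k x : ind f m d k x = 0 \/ ind f m d k x = 1.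
Proof. unfold ind; destruct Rle_dec; auto. Qed.

Lemma ind_mono f m d k a b : (forall x y, a <= x -> x <= y -> y <= b -> f x <= f y) ->
  forall x y, a <= x -> x <= y -> y <= b -> ind f m d k x <= ind f m d k y.
Proof.
intros hf x y h1 h2 h3. unfold ind. assert (f x <= f y) by (apply hf; auto).
destruct Rle_dec; destruct Rle_dec; lra.
Qed.

Lemma S_int f m d a b : a <= b -> (forall x y, a <= x -> x <= y -> y <= b -> f x <= f y) ->
  forall n, ex_RInt (S_ f m d n) a b.
Proof.
intros hab hf n. induction n as [|n IH].
- apply ex_RInt_ext with (ind f m d 0). { intros; unfold S_; simpl; auto. }
  apply mono01; auto. apply ind_01. apply ind_mono; auto.
- apply ex_RInt_ext with (fun x => plus (S_ f m d n x) (ind f m d (S n) x)).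
  { intros; unfold S_; simpl; auto. }
  apply (ex_RInt_plus (S_ f m d n) (ind f m d (S n))); auto. apply mono01; auto. apply ind_01. apply ind_mono; auto.
Qed.

Lemma mono_glob (f : R -> R) m M a b : a <= b ->
  (forall x y, x <= y -> f x <= f y) -> (forall x, m <= f x <= M) -> ex_RInt f a b.
Proof.
intros hab hf hb.
set (d := fun N : nat => (M - m) / (INR N + 1)).
set (fa := fun (N : nat) x => m + d N * S_ f m (d N) N x).
assert (hd : forall N, 0 <= d N).
{ intro N. unfold d. assert (0 <= m - M \/ 0 <= M - m) by lra.
  assert (0 < INR N + 1) by (generalize (pos_INR N); lra).
  apply Rdiv_le_0_compat; try lra. specialize (hb 0). lra. }
assert (hdN : forall N, d N * (INR N + 1) = M - m).
{ intro N. unfold d. assert (0 < INR N + 1) by (generalize (pos_INR N); lra). field; lra. }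
assert (Hi : forall N, ex_RInt (fa N) a b).
{ intro N. unfold fa. apply ex_RInt_plus with (f := fun _ => m) (g := fun x => d N * S_ f m (d N) N x).
  apply ex_RInt_const. apply ex_RInt_scal with (f := S_ f m (d N) N).
  apply S_int; auto. }
assert (Herr : forall N x, Rabs (fa N x - f x) <= d N).
{ intros N x. destruct (claim f m (d N) (hd N) x (proj1 (hb x)) N) as [_ [[e1 e2]|[e1 e2]]];
  unfold fa; specialize (hb x); specialize (hdN N); specialize (hd N); apply Rabs_le.
  - rewrite e1. split; nra.
  - split; nra. }
destruct (filterlim_RInt (V := R_CompleteNormedModule) fa a b eventually eventually_filter f (fun N => RInt (fa N) a b)) as [If [_ H]].
- intro N. apply RInt_correct. auto.
- intros P [eps HP]. destruct (INR_unbounded ((M - m) / eps)) as [N0 hN0].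
  exists N0. intros N hN. apply HP. intro t.
  change (Rabs (fa N t - f t) < eps).
  eapply Rle_lt_trans. apply Herr.
  assert (INR N0 <= INR N) by (apply le_INR; auto).
  unfold d. apply Rlt_div_l. generalize (pos_INR N); lra.
  destruct eps as [e he]; simpl in *.
  apply Rmult_lt_compat_r with (r := e) in hN0; auto.
  unfold Rdiv in hN0. rewrite Rmult_assoc, Rinv_l in hN0 by lra. nra.
- exists If. exact H.
Qed.
Lemma mono_inc (f : R -> R) a b : a <= b ->
  (forall x y, a <= x -> x <= y -> y <= b -> f x <= f y) -> ex_RInt f a b.
Proof.
intros hab hf.
set (g := fun x => f (Rmax a (Rmin b x))).
assert (ex_RInt g a b).
{ apply (mono_glob g (f a) (f b)); auto.
  - intros x y hxy. unfold g. apply hf.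
    + apply Rmax_l.
    + apply Rle_max_compat_l. apply Rle_min_compat_l. auto.
    + apply Rmax_lub; auto. apply Rmin_l.
  - intro x. unfold g. split; apply hf; try apply Rmax_l; try apply Rmax_lub; try lra;
    try apply Rmin_l; apply Rle_refl. }
apply ex_RInt_ext with g; auto.
intros x hx. rewrite Rmin_left in hx by lra. rewrite Rmax_right in hx by lra.
unfold g. rewrite Rmin_right by lra. rewrite Rmax_right by lra. auto.
Qed.

Lemma mono_dec (f : R -> R) a b : a <= b ->
  (forall x y, a <= x -> x <= y -> y <= b -> f y <= f x) -> ex_RInt f a b.
Proof.
intros hab hf.
assert (ex_RInt (fun x => - f x) a b).
{ apply mono_inc; auto. intros x y h1 h2 h3. specialize (hf x y h1 h2 h3). lra. }
apply ex_RInt_ext with (fun x => opp (- f x)).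
{ intros; unfold opp; simpl; ring. }
apply (ex_RInt_opp (fun x => - f x)). auto.
Qed.

Lemma RInt_one a b : RInt (fun _ => 1) a b = b - a.
Proof. rewrite RInt_const. unfold scal; simpl; unfold mult; simpl. ring. Qed.

Section Props.
Variables (s eta p : R) (hs : 0 <= s) (heta : 0 <= eta <= 1) (hp : 0 <= p).

Ltac crush := unfold ind_S, ind_R, beta_pay, pi_S, pi_R, pi_A in *; repeat destruct Rlt_dec; try nra.

Lemma S01 P v c : ind_S eta s p P v c = 0 \/ ind_S eta s p P v c = 1.
Proof. unfold ind_S; repeat destruct Rlt_dec; auto. Qed.

Lemma S_v P c v1 v2 : v1 <= v2 -> ind_S eta s p P v1 c <= ind_S eta s p P v2 c.
Proof. intros. crush. Qed.

Lemma S_c P v c1 c2 : c1 <= c2 -> ind_S eta s p P v c2 <= ind_S eta s p P v c1.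
Proof. intros. crush. Qed.

Lemma S_P P1 P2 v c : P1 <= P2 -> ind_S eta s p P1 v c <= ind_S eta s p P2 v c.
Proof. intros. crush. Qed.

Lemma pos_beta v : 0 < eta * (v - s) - p -> 0 <= beta_pay eta s p v.
Proof. intros h. unfold beta_pay. assert (s < v) by nra. nra. Qed.

Definition U1 v := if Rlt_dec 0 (eta * (v - s) - p) then beta_pay eta s p v else 0.
Definition U2 P c v := if Rlt_dec (pi_S P v c) (pi_R eta s p v) then 0 else U1 v.

Lemma U1_mono v1 v2 : v1 <= v2 -> U1 v1 <= U1 v2.
Proof.
intros h. unfold U1. generalize (pos_beta v2); intro hb.
destruct Rlt_dec; destruct Rlt_dec; try nra.
unfold beta_pay; nra.
Qed.

Lemma U1_nn v : 0 <= U1 v.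
Proof. unfold U1. generalize (pos_beta v). destruct Rlt_dec; lra. Qed.

Lemma U2_mono P c v1 v2 : v1 <= v2 -> U2 P c v1 <= U2 P c v2.
Proof.
intros h. unfold U2. generalize (U1_mono v1 v2 h) (U1_nn v1) (U1_nn v2); intros.
unfold U1 in *. unfold pi_S, pi_R in *.
destruct (Rlt_dec (v1 - c + P) (eta * (v1 - s) - p));
destruct (Rlt_dec (v2 - c + P) (eta * (v2 - s) - p)); try lra.
destruct (Rlt_dec 0 (eta * (v1 - s) - p)); try lra.
destruct (Rlt_dec 0 (eta * (v2 - s) - p)); nra.
Qed.

Lemma R_split P c v : ind_R eta s p P v c * beta_pay eta s p v = U1 v - U2 P c v.
Proof. unfold U2, U1, ind_R, pi_A. repeat destruct Rlt_dec; lra. Qed.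

Lemma R_c P v c1 c2 : c1 <= c2 ->
  ind_R eta s p P v c1 * beta_pay eta s p v <= ind_R eta s p P v c2 * beta_pay eta s p v.
Proof. intros. generalize (pos_beta v). crush. Qed.

Lemma R_P P1 P2 v c : P1 <= P2 ->
  ind_R eta s p P2 v c * beta_pay eta s p v <= ind_R eta s p P1 v c * beta_pay eta s p v.
Proof. intros. generalize (pos_beta v). crush. Qed.

Definition NS P c := RInt (fun v => ind_S eta s p P v c) 0 1.
Definition BR P c := RInt (fun v => ind_R eta s p P v c * beta_pay eta s p v) 0 1.

Lemma exS P c : ex_RInt (fun v => ind_S eta s p P v c) 0 1.
Proof. apply mono_inc; try lra. intros; apply S_v; auto. Qed.

Lemma exR P c : ex_RInt (fun v => ind_R eta s p P v c * beta_pay eta s p v) 0 1.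
Proof.
apply ex_RInt_ext with (fun v => minus (U1 v) (U2 P c v)).
{ intros. rewrite R_split. reflexivity. }
apply (ex_RInt_minus U1 (U2 P c)); apply mono_inc; try lra; intros.
apply U1_mono; auto. apply U2_mono; auto.
Qed.

Lemma NS_c P c1 c2 : c1 <= c2 -> NS P c2 <= NS P c1.
Proof. intros. apply RInt_le; try lra; try apply exS. intros; apply S_c; auto. Qed.

Lemma BR_c P c1 c2 : c1 <= c2 -> BR P c1 <= BR P c2.
Proof. intros. apply RInt_le; try lra; try apply exR. intros; apply R_c; auto. Qed.

Lemma exNS P a b : a <= b -> ex_RInt (NS P) a b.
Proof. intros. apply mono_dec; auto. intros; apply NS_c; auto. Qed.

Lemma exBR P a b : a <= b -> ex_RInt (BR P) a b.
Proof. intros. apply mono_inc; auto. intros; apply BR_c; auto. Qed.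

Lemma NS_nn P c : 0 <= NS P c.
Proof. apply RInt_ge_0; try lra. apply exS. intros; destruct (S01 P x c); lra. Qed.

Lemma N_mono P1 P2 : P1 <= P2 -> N_se eta s p P1 <= N_se eta s p P2.
Proof.
intros. apply RInt_le; try lra; try apply exNS; try lra.
intros. apply RInt_le; try lra; try apply exS. intros; apply S_P; auto.
Qed.

Lemma B_mono P1 P2 : P1 <= P2 -> B_se eta s p P2 <= B_se eta s p P1.
Proof.
intros. apply RInt_le; try lra; try apply exBR; try lra.
intros. apply RInt_le; try lra; try apply exR. intros; apply R_P; auto.
Qed.

Lemma N_pos y : 0 < y -> 0 < N_se eta s p y.
Proof.
intros hy. set (mm := Rmin y 1).
assert (0 < mm) by (unfold mm; apply Rmin_glb_lt; lra).
assert (mm <= 1) by (unfold mm; apply Rmin_r).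
assert (mm <= y) by (unfold mm; apply Rmin_l).
unfold N_se. fold (NS y).
rewrite <- (RInt_Chasles (NS y) 0 mm 1) by (apply exNS; lra).
assert (e : RInt (NS y) 0 mm = mm).
{ rewrite (RInt_ext (NS y) (fun _ => 1)). rewrite RInt_one; simpl; lra.
  intros c hc. rewrite Rmin_left in hc by lra. rewrite Rmax_right in hc by lra.
  unfold NS. rewrite (RInt_ext _ (fun _ => 1)). rewrite RInt_one; simpl; lra.
  intros v hv. rewrite Rmin_left in hv by lra. rewrite Rmax_right in hv by lra.
  crush. }
assert (0 <= RInt (NS y) mm 1).
{ apply RInt_ge_0; auto. apply exNS; auto. intros; apply NS_nn. }
change (plus (RInt (NS y) 0 mm) (RInt (NS y) mm 1)) with (RInt (NS y) 0 mm + RInt (NS y) mm 1).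
lra.
Qed.

End Props.

Theorem lemma2 (s eta p : R) (hs : 0 <= s) (heta : 0 <= eta <= 1) (hp : 0 <= p) :
  (forall x y, 0 <= x -> x < y -> y <= Phi0 eta s p ->
     Lambda eta s p x < Lambda eta s p y)
  \/
  (exists Phi', 0 <= Phi' <= Phi0 eta s p /\
     (forall x y, 0 <= x -> x < y -> y <= Phi' ->
        Lambda eta s p y < Lambda eta s p x) /\
     (forall x y, Phi' <= x -> x < y -> y <= Phi0 eta s p ->
        Lambda eta s p x < Lambda eta s p y)).
Proof.
left. intros x y hx hxy _.
assert (h1 : N_se eta s p x <= N_se eta s p y) by (apply N_mono; auto; lra).
assert (h2 : B_se eta s p y <= B_se eta s p x) by (apply B_mono; auto; lra).
assert (h3 : 0 < N_se eta s p y) by (apply N_pos; auto; lra).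
unfold Lambda. nra.
Qed.
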